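(* Adopt the following setting with $n_p=2$. Let $P\subset\mathbb{R}^{2}$ be convex and compact, $\mathbf{f}:\mathbb{R}^{n_x}\times\mathbb{R}^2\to\mathbb{R}^{n_x}$, $Q\subset P$ the nonempty set of $\mathbf{p}\in P$ for which $\mathbf{f}(\mathbf{z},\mathbf{p})=\mathbf{0}$ has a solution, $\mathbf{x}:Q\to\mathbb{R}^{n_x}$ with $\mathbf{f}(\mathbf{x}(\mathbf{p}),\mathbf{p})=\mathbf{0}$, and $X=[\mathbf{x}^L,\mathbf{x}^U]$ with $\mathbf{x}(\mathbf{p})\in X$ for $\mathbf{p}\in Q$. Write $\mathbf{f}=(\tilde{\mathbf{f}},\mathbf{h})$ with $\mathbf{h}$ affine (values in $\mathbb{R}^{n_h}$) and no component of $\tilde{\mathbf{f}}$ affine; for each $\tilde i$ let $\tilde f_{\tilde i}^{cv}=\max_j\tilde f_{\tilde i}^{cv,j}$, $\tilde f_{\tilde i}^{cc}=\min_j\tilde f_{\tilde i}^{cc,j}$ be convex/concave relaxations of $\tilde f_{\tilde i}$ on $X\times P$ with finitely many continuously differentiable convex pieces $\tilde f_{\tilde i}^{cv,j}$ and concave pieces $\tilde f_{\tilde i}^{cc,j}$. Let $\mathbf{g}$ collect all $\tilde f_{\tilde i}^{cv,j}$, $-\tilde f_{\tilde i}^{cc,j}$, $\mathbf{x}^L-\boldsymbol\xi$ and $\boldsymbol\xi-\mathbf{x}^U$. Fix $i$ and define $x_i^{cv}(\mathbf{p}):=\min\{\xi_i:\boldsymbol\xi\in\mathbb{R}^{n_x},\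 \mathbf{h}(\boldsymbol\xi,\mathbf{p})=\mathbf{0},\ \mathbf{g}(\boldsymbol\xi,\mathbf{p})\le\mathbf{0}\}$. Let $\hat{\mathbf{p}}\in\mathrm{int}(Q)$, suppose the gradients $\nabla_{\boldsymbol\xi}h_k$ ($k=1,\dots,n_h$) are linearly independent, and suppose there is a neighborhood $N\subset Q$ of $\hat{\mathbf{p}}$ such that each $\mathbf{p}\in N$ admits $\boldsymbol\xi_{\mathbf{p}}\in X$ with $\mathbf{h}(\boldsymbol\xi_{\mathbf{p}},\mathbf{p})=\mathbf{0}$ and $\mathbf{g}(\boldsymbol\xi_{\mathbf{p}},\mathbf{p})<\mathbf{0}$. Then $$\frac12\begin{bmatrix}[x_i^{cv}]'(\hat{\mathbf{p}};\mathbf{e}^{(1)})-[x_i^{cv}]'(\hat{\mathbf{p}};-\mathbf{e}^{(1)})\\ [x_i^{cv}]'(\hat{\mathbf{p}};\mathbf{e}^{(2)})-[x_i^{cv}]'(\hat{\mathbf{p}};-\mathbf{e}^{(2)})\end{bmatrix}$$ is a subgradient of $x_i^{cv}$ at $\hat{\mathbf{p}}$.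
   Context: $\mathbf{e}^{(1)},\mathbf{e}^{(2)}$ are the unit coordinate vectors in $\mathbb{R}^2$. Inequalities between vectors are componentwise. Convex (concave) relaxation of $\phi$ on $X\times P$: a convex function $\le\phi$ (concave function $\ge\phi$) there. $[\phi]'(\mathbf{p};\mathbf{d})=\lim_{\alpha\downarrow0}(\phi(\mathbf{p}+\alpha\mathbf{d})-\phi(\mathbf{p}))/\alpha$. A subgradient of the convex function $x_i^{cv}$ at $\hat{\mathbf{p}}$ is $\mathbf{s}$ with $x_i^{cv}(\boldsymbol\eta)\ge x_i^{cv}(\hat{\mathbf{p}})+\langle\mathbf{s},\boldsymbol\eta-\hat{\mathbf{p}}\rangle$ for all $\boldsymbol\eta$ in the domain. *)

(* Defs.v *)
From HB Require Import structures.
From mathcomp Require Import all_boot all_order all_algebra.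
From mathcomp Require Import all_classical all_reals all_analysis.
Set Implicit Arguments. Unset Strict Implicit. Unset Printing Implicit Defensive.
Import Order.TTheory GRing.Theory Num.Theory.
Import numFieldNormedType.Exports.
Local Open Scope classical_set_scope.
Local Open Scope ring_scope.

Section Defs.
Variable R : realType.

Definition inbox (n : nat) (xL xU z : 'rV[R]_n) : Prop :=
  forall j, xL 0 j <= z 0 j <= xU 0 j.

Definition inbox_strict (n : nat) (xL xU z : 'rV[R]_n) : Prop :=
  forall j, xL 0 j < z 0 j < xU 0 j.

Definition convex_setR (n : nat) (S : set 'rV[R]_n) : Prop :=
  forall a b t, S a -> S b -> 0 <= t <= 1 -> S (t *: a + (1 - t) *: b).

Definition convex_on_XP (nx : nat) (xL xU : 'rV[R]_nx) (P : set 'rV[R]_2)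
  (phi : 'rV[R]_nx -> 'rV[R]_2 -> R) : Prop :=
  forall z1 p1 z2 p2 t, inbox xL xU z1 -> P p1 -> inbox xL xU z2 -> P p2 ->
    0 <= t <= 1 ->
    phi (t *: z1 + (1 - t) *: z2) (t *: p1 + (1 - t) *: p2)
      <= t * phi z1 p1 + (1 - t) * phi z2 p2.

Definition concave_on_XP (nx : nat) (xL xU : 'rV[R]_nx) (P : set 'rV[R]_2)
  (phi : 'rV[R]_nx -> 'rV[R]_2 -> R) : Prop :=
  convex_on_XP xL xU P (fun z p => - phi z p).

Definition C1 (nx : nat) (phi : 'rV[R]_nx -> 'rV[R]_2 -> R) : Prop :=
  let F := fun zp : 'rV[R]_nx * 'rV[R]_2 => phi zp.1 zp.2 in
  forall v, (forall zp, derivable F zp v) /\ continuous (fun zp => 'D_v F zp).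

Definition affine_fun (nx : nat) (phi : 'rV[R]_nx -> 'rV[R]_2 -> R) : Prop :=
  exists (a : 'rV[R]_nx) (b : 'rV[R]_2) (c : R),
    forall z p, phi z p = (z *m a^T) 0 0 + (p *m b^T) 0 0 + c.

(* feasible set of the relaxed problem defining x_i^cv at p:
   h(xi,p) = 0 and g(xi,p) <= 0, where g collects the convex pieces fcv,
   the negated concave pieces -fcc, xL - xi and xi - xU *)
Definition feasible (nx nf nh : nat) (xL xU : 'rV[R]_nx)
  (h : 'rV[R]_nx -> 'rV[R]_2 -> 'rV[R]_nh)
  (ncv ncc : 'I_nf -> nat)
  (fcv : forall it : 'I_nf, 'I_(ncv it) -> 'rV[R]_nx -> 'rV[R]_2 -> R)
  (fcc : forall it : 'I_nf, 'I_(ncc it) -> 'rV[R]_nx -> 'rV[R]_2 -> R)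
  (p : 'rV[R]_2) : set 'rV[R]_nx :=
  [set xi | h xi p = 0 /\
     (forall it j, fcv it j xi p <= 0) /\
     (forall it j, - fcc it j xi p <= 0) /\
     (forall j, xL 0 j - xi 0 j <= 0) /\
     (forall j, xi 0 j - xU 0 j <= 0)].

Definition xcv (nx nf nh : nat) (xL xU : 'rV[R]_nx)
  (h : 'rV[R]_nx -> 'rV[R]_2 -> 'rV[R]_nh)
  (ncv ncc : 'I_nf -> nat)
  (fcv : forall it : 'I_nf, 'I_(ncv it) -> 'rV[R]_nx -> 'rV[R]_2 -> R)
  (fcc : forall it : 'I_nf, 'I_(ncc it) -> 'rV[R]_nx -> 'rV[R]_2 -> R)
  (i : 'I_nx) (p : 'rV[R]_2) : R :=
  inf [set xi 0 i | xi in feasible xL xU h fcv fcc p].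

Definition dirder_is (phi : 'rV[R]_2 -> R) (p d : 'rV[R]_2) (l : R) : Prop :=
  (fun a : R => (phi (p + a *: d) - phi p) / a) a @[a --> 0^'+] --> l.

Definition e1 : 'rV[R]_2 := delta_mx 0 0.
Definition e2 : 'rV[R]_2 := delta_mx 0 ord_max.

Definition dotv (n : nat) (u v : 'rV[R]_n) : R := \sum_(j < n) u 0 j * v 0 j.

End Defs.

(* Main.v *)
Require Import Defs.
From HB Require Import structures.
From mathcomp Require Import all_boot all_order all_algebra.
From mathcomp Require Import all_classical all_reals all_analysis.
From mathcomp Require Import ring lra.
Import Order.TTheory GRing.Theory Num.Theory.
Import numFieldNormedType.Exports.
Local Open Scope classical_set_scope.
Local Open Scope ring_scope.
Set Implicit Arguments. Unset Strict Implicit.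

Definition convD {R : realType} (D : set 'rV[R]_2) (phi : 'rV[R]_2 -> R) :=
  forall a b t, D a -> D b -> 0 <= t <= 1 -> phi (t *: a + (1 - t) *: b) <= t * phi a + (1 - t) * phi b.

Lemma q_mono (R : realType) (D : set 'rV[R]_2) (phi : 'rV[R]_2 -> R) (p w : 'rV[R]_2) (s t : R) :
  convD D phi -> D p -> D (p + t *: w) -> 0 < s -> s <= t ->
  (phi (p + s *: w) - phi p) / s <= (phi (p + t *: w) - phi p) / t.
Proof.
move=> Hc Dp Dt s0 st.
have t0 : 0 < t by apply: lt_le_trans st.
have l01 : 0 <= s / t <= 1.
  by apply/andP; split; [apply: divr_ge0; apply: ltW | rewrite ler_pdivrMr // mul1r].
have H := Hc _ _ _ Dt Dp l01.
have E : s / t *: (p + t *: w) + (1 - s / t) *: p = p + s *: w.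
  apply/rowP => j; rewrite !mxE; field; exact: lt0r_neq0.
rewrite E in H.
rewrite ler_pdivrMr //.
have -> : (phi (p + t *: w) - phi p) / t * s = s / t * phi (p + t *: w) - s / t * phi p.
  by field; exact: lt0r_neq0.
move: H; set l := s / t; lra.
Qed.

Lemma q_lb (R : realType) (D : set 'rV[R]_2) (phi : 'rV[R]_2 -> R) (p w : 'rV[R]_2) (s t : R) :
  convD D phi -> D (p + s *: (- w)) -> D (p + t *: w) -> 0 < s -> 0 < t ->
  - ((phi (p + s *: (- w)) - phi p) / s) <= (phi (p + t *: w) - phi p) / t.
Proof.
move=> Hc Ds Dt s0 t0.
have st0 : 0 < s + t by lra.
have l01 : 0 <= s / (s + t) <= 1.
  by apply/andP; split; [apply: divr_ge0; apply: ltW | rewrite ler_pdivrMr // mul1r; lra].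
have H := Hc _ _ _ Dt Ds l01.
have E : s / (s + t) *: (p + t *: w) + (1 - s / (s + t)) *: (p + s *: - w) = p.
  apply/rowP => j; rewrite !mxE; field; exact: lt0r_neq0.
rewrite E in H.
have e1 : 1 - s / (s + t) = t / (s + t) by field; exact: lt0r_neq0.
rewrite e1 in H.
have H2 : (s + t) * phi p <= s * phi (p + t *: w) + t * phi (p + s *: - w).
  have el : (s + t) * (s / (s + t)) = s by field; exact: lt0r_neq0.
  have em : (s + t) * (t / (s + t)) = t by field; exact: lt0r_neq0.
  move: H el em; set l := s / (s + t); set m := t / (s + t).
  set A := phi (p + t *: w); set B := phi (p + s *: - w) => H el em.
  have := H; rewrite -(ler_pM2l st0).
  have -> : (s + t) * (l * A + m * B) = ((s + t) * l) * A + ((s + t) * m) * B by ring.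
  by rewrite el em.
rewrite ler_pdivlMr // mulNr mulrAC lerNl.
rewrite ler_pdivlMr //.
set A := phi (p + t *: w) in H2 *; set B := phi (p + s *: - w) in H2 *.
nra.
Qed.

Lemma line_in (R : realType) (D : set 'rV[R]_2) (p w : 'rV[R]_2) (r : R) :
  0 < r -> (forall q, ball p r q -> D q) ->
  forall t, `|t| < r / (`|w| + 1) -> D (p + t *: w).
Proof.
move=> r0 Hb t Ht; apply: Hb.
rewrite -ball_normE /ball_ /= opprD addrA subrr add0r normrN normrZ.
have w1 : 0 < `|w| + 1 by rewrite ltr_wpDl.
move: Ht; rewrite ltr_pdivlMr // => Ht.
apply: le_lt_trans Ht; apply: ler_wpM2l => //; lra.
Qed.

Definition qd {R : realType} (phi : 'rV[R]_2 -> R) (p w : 'rV[R]_2) (t : R) :=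
  (phi (p + t *: w) - phi p) / t.

Lemma dir_lemma (R : realType) (D : set 'rV[R]_2) (phi : 'rV[R]_2 -> R) (p w : 'rV[R]_2) (r : R) :
  convD D phi -> 0 < r -> (forall q, ball p r q -> D q) ->
  exists a, dirder_is phi p w a /\
    (forall t, 0 < t < r / (`|w| + 1) -> a <= qd phi p w t) /\
    (forall e, 0 < e -> exists t0, 0 < t0 < r / (`|w| + 1) /\
        forall t, 0 < t <= t0 -> qd phi p w t <= a + e).
Proof.
move=> Hc r0 Hb.
set d := r / (`|w| + 1).
have d0 : 0 < d by rewrite divr_gt0 // ltr_wpDl.
have Hl := @line_in R D p w r r0 Hb.
have Hl' := @line_in R D p (- w) r r0 Hb.
rewrite normrN -/d in Hl'.
rewrite -/d in Hl.
clearbody d.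
have Dp : D p.
  by have := Hl 0; rewrite scale0r addr0 normr0; apply.
set E := [set qd phi p w t | t in [set t | 0 < t < d]].
have lbE : has_lbound E.
  exists (- qd phi p (- w) (d / 2)) => _ [t /andP[t0 td] <-].
  have h1 : D (p + (d / 2) *: - w) by apply: Hl'; rewrite gtr0_norm; lra.
  have h2 : D (p + t *: w) by apply: Hl; rewrite gtr0_norm; lra.
  apply: (q_lb Hc h1 h2); lra.
have neE : E !=set0.
  by exists (qd phi p w (d / 2)); exists (d / 2) => //; apply/andP; lra.
set a := inf E.
have F1 : forall t, 0 < t < d -> a <= qd phi p w t.
  by move=> t Ht; apply: ge_inf => //; exists t.
have F2 : forall e, 0 < e -> exists t0, 0 < t0 < d /\
        forall t, 0 < t <= t0 -> qd phi p w t <= a + e.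
  move=> e e0; have [_ [t0 /andP[t00 t0d] <-] Ht0] := inf_adherent e0 (conj neE lbE).
  exists t0; split; first lra.
  move=> t /andP[t0' tt0]; apply: le_trans (ltW Ht0).
  have Dt0 : D (p + t0 *: w) by apply: Hl; rewrite gtr0_norm; lra.
  apply: (q_mono Hc Dp Dt0); lra.
exists a; split => //.
rewrite /dirder_is; apply/cvgrPdist_lt => e e0.
have e20 : 0 < e / 2 by lra.
have [t0 [/andP[t00 t0d] Ht0]] := F2 _ e20.
near=> t.
have tp : 0 < t by near: t; exact: nbhs_right_gt.
have tt0 : t < t0 by near: t; exact: nbhs_right_lt.
have h1 := F1 t ltac:(apply/andP; lra).
have h2 := Ht0 t ltac:(apply/andP; lra).
rewrite /qd in h1 h2.
rewrite ltr_norml; apply/andP; split; lra.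
Unshelve. all: by end_near.
Qed.

Lemma G_pos (R : realType) (D : set 'rV[R]_2) (phi : 'rV[R]_2 -> R) (p w : 'rV[R]_2) (d a c : R) :
  0 < d -> 0 < c -> (forall t, `|t| < d -> D (p + t *: w)) ->
  (forall t, 0 < t < d -> a <= qd phi p w t) ->
  (forall e, 0 < e -> exists t0, 0 < t0 < d /\
        forall t, 0 < t <= t0 -> qd phi p w t <= a + e) ->
  (exists t1, 0 < t1 /\ forall t, 0 < t <= t1 ->
      D (p + t *: (c *: w)) /\ t * (c * a) <= phi (p + t *: (c *: w)) - phi p) /\
  (forall e, 0 < e -> exists t0, 0 < t0 /\ forall t, 0 < t <= t0 ->
      D (p + t *: (c *: w)) /\ phi (p + t *: (c *: w)) - phi p <= t * (c * a + e)).
Proof.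
move=> d0 c0 Hl F1 F2; split.
  exists (d / (2 * c)); split; first by apply: divr_gt0 => //; lra.
  move=> t /andP[t0 tt1]; rewrite scalerA.
  have tc0 : 0 < t * c by apply: mulr_gt0.
  have tcd : t * c <= d / 2.
    by move: tt1; rewrite ler_pdivlMr ?mulr_gt0 // => h; rewrite ler_pdivlMr //; lra.
  split; first by apply: Hl; rewrite gtr0_norm //; lra.
  have := F1 (t * c) ltac:(apply/andP; lra).
  rewrite /qd ler_pdivlMr // => h.
  have -> : t * (c * a) = a * (t * c) by ring.
  exact: h.
move=> e e0.
have ec0 : 0 < e / c by apply: divr_gt0.
have [t0 [/andP[t00 t0d] Ht0]] := F2 _ ec0.
exists (t0 / c); split; first by apply: divr_gt0.
move=> t /andP[tp tt0]; rewrite scalerA.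
have tc0 : 0 < t * c by apply: mulr_gt0.
have tct0 : t * c <= t0 by move: tt0; rewrite ler_pdivlMr.
split; first by apply: Hl; rewrite gtr0_norm //; lra.
have := Ht0 (t * c) ltac:(apply/andP; lra).
rewrite /qd ler_pdivrMr // => h.
have -> : t * (c * a + e) = (a + e / c) * (t * c) by field; exact: lt0r_neq0.
exact: h.
Qed.

Definition rho {R : realType} (a b y : R) := if 0 <= y then y * a else - y * b.

Lemma G_y (R : realType) (D : set 'rV[R]_2) (phi : 'rV[R]_2 -> R) (p u : 'rV[R]_2) (d a b y : R) :
  0 < d -> D p -> (forall t, `|t| < d -> D (p + t *: u)) ->
  (forall t, 0 < t < d -> a <= qd phi p u t) ->
  (forall e, 0 < e -> exists t0, 0 < t0 < d /\
        forall t, 0 < t <= t0 -> qd phi p u t <= a + e) ->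
  (forall t, 0 < t < d -> b <= qd phi p (- u) t) ->
  (forall e, 0 < e -> exists t0, 0 < t0 < d /\
        forall t, 0 < t <= t0 -> qd phi p (- u) t <= b + e) ->
  (exists t1, 0 < t1 /\ forall t, 0 < t <= t1 ->
      D (p + t *: (y *: u)) /\ t * rho a b y <= phi (p + t *: (y *: u)) - phi p) /\
  (forall e, 0 < e -> exists t0, 0 < t0 /\ forall t, 0 < t <= t0 ->
      D (p + t *: (y *: u)) /\ phi (p + t *: (y *: u)) - phi p <= t * (rho a b y + e)).
Proof.
move=> d0 Dp Hl F1 F2 F1' F2'.
have Hl' : forall t, `|t| < d -> D (p + t *: - u).
  by move=> t ht; rewrite scalerN -scaleNr; apply: Hl; rewrite normrN.
rewrite /rho; case: (lerP 0 y) => hy.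
  move: hy; rewrite le_eqVlt => /orP[/eqP hy|hy].
    rewrite -hy scale0r mul0r; split.
      by exists 1; split => // t _; rewrite scaler0 addr0 subrr mulr0.
    move=> e e0; exists 1; split => // t /andP[t0 _]; rewrite scaler0 addr0 subrr add0r.
    by split => //; apply: mulr_ge0; lra.
  exact: (G_pos d0 hy Hl F1 F2).
have -> : y *: u = (- y) *: (- u) by rewrite scaleNr scalerN opprK.
apply: (G_pos d0 _ Hl' F1' F2'); lra.
Qed.

Lemma two_d (R : realType) (D : set 'rV[R]_2) (phi : 'rV[R]_2 -> R) (p u v eta : 'rV[R]_2) (x y ry rx : R) :
  convD D phi ->
  (forall a b t, D a -> D b -> 0 <= t <= 1 -> D (t *: a + (1 - t) *: b)) ->
  D p -> D eta -> eta - p = y *: u + x *: v ->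
  (exists t1, 0 < t1 /\ forall t, 0 < t <= t1 ->
      D (p + t *: (y *: u)) /\ t * ry <= phi (p + t *: (y *: u)) - phi p) ->
  (forall e, 0 < e -> exists t0, 0 < t0 /\ forall t, 0 < t <= t0 ->
      D (p + t *: ((- x) *: v)) /\ phi (p + t *: ((- x) *: v)) - phi p <= t * (rx + e)) ->
  ry <= phi eta - phi p + rx.
Proof.
move=> Hc HD Dp De Hd [t1 [t10 G1]] G2.
apply/ler_addgt0Pr => e e0.
have [t0 [t00 G2']] := G2 e e0.
set t := Order.min 1 (Order.min t0 t1).
have tp : 0 < t by rewrite !lt_min t00 t10 ltr01.
have t_1 : t <= 1 by rewrite ge_min lexx.
have t_0 : t <= t0 by rewrite /t !ge_min lexx orbT.
have t_2 : t <= t1 by rewrite /t !ge_min lexx !orbT.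
clearbody t.
have [DM hM] := G1 (t / 2) ltac:(apply/andP; lra).
have [DZ hZ] := G2' t ltac:(apply/andP; lra).
have DE := HD _ _ t De Dp ltac:(apply/andP; lra).
have hE := Hc _ _ t De Dp ltac:(apply/andP; lra).
have hC := Hc _ _ (1 / 2) DE DZ ltac:(apply/andP; lra).
have Eid : (1 / 2) *: (t *: eta + (1 - t) *: p) + (1 - 1 / 2) *: (p + t *: ((- x) *: v))
    = p + (t / 2) *: (y *: u).
  apply/rowP => j; rewrite !mxE.
  have Hj := congr1 (fun M : 'rV[R]_2 => M 0 j) Hd; rewrite /= !mxE in Hj.
  have -> : eta 0 j = p 0 j + y * u 0 j + x * v 0 j by lra.
  by field; rewrite ?pnatr_eq0.
rewrite Eid in hC.
have key : t / 2 * ry <= t / 2 * (phi eta - phi p + (rx + e)).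
  move: hM hC hE hZ.
  set A := phi (p + (t / 2) *: (y *: u)); set B := phi (t *: eta + (1 - t) *: p).
  set C := phi (p + t *: (- x *: v)).
  lra.
by move: key; rewrite ler_pM2l //; lra.
Qed.

Lemma rho_diff (R : realType) (a b y : R) : rho a b y - rho a b (- y) = y * (a - b).
Proof.
rewrite /rho; case: (lerP 0 y) => hy.
  case: (lerP 0 (- y)) => hy'.
    have -> : y = 0 by lra.
    ring.
  by rewrite opprK; ring.
case: (lerP 0 (- y)) => hy'; last by lra.
ring.
Qed.

Lemma decomp2 (R : realType) (d : 'rV[R]_2) : d = d 0 0 *: e1 R + d 0 ord_max *: e2 R.
Proof.
apply/rowP => j; rewrite !mxE /=.
case: j => [[|[|//]] Hj] /=.
  by rewrite mulr1 mulr0 addr0; congr (d 0 _); apply: val_inj.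
by rewrite mulr1 mulr0 add0r; congr (d 0 _); apply: val_inj.
Qed.

Lemma dot2 (R : realType) (a b : R) (d : 'rV[R]_2) :
  dotv (2^-1 *: \row_(j < 2) (if j == 0 then a else b)) d = 2^-1 * a * d 0 0 + 2^-1 * b * d 0 ord_max.
Proof.
rewrite /dotv big_ord_recr big_ord_recr big_ord0 /= !mxE /=.
by rewrite add0r; congr (_ + _); congr (_ * d 0 _); apply: val_inj.
Qed.

Lemma compass (R : realType) (D : set 'rV[R]_2) (phi : 'rV[R]_2 -> R) (p : 'rV[R]_2) (r : R) :
  convD D phi ->
  (forall a b t, D a -> D b -> 0 <= t <= 1 -> D (t *: a + (1 - t) *: b)) ->
  0 < r -> (forall q, ball p r q -> D q) ->
  exists d1p d1m d2p d2m : R,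
    dirder_is phi p (e1 R) d1p /\ dirder_is phi p (- e1 R) d1m /\
    dirder_is phi p (e2 R) d2p /\ dirder_is phi p (- e2 R) d2m /\
    let s : 'rV[R]_2 := 2^-1 *: \row_(j < 2) (if j == 0 then d1p - d1m else d2p - d2m) in
    forall eta, D eta -> phi p + dotv s (eta - p) <= phi eta.
Proof.
move=> Hc HD r0 Hb.
have [a1 [Da1 [F1a1 F2a1]]] := @dir_lemma R D phi p (e1 R) r Hc r0 Hb.
have [b1 [Db1 [F1b1 F2b1]]] := @dir_lemma R D phi p (- e1 R) r Hc r0 Hb.
have [a2 [Da2 [F1a2 F2a2]]] := @dir_lemma R D phi p (e2 R) r Hc r0 Hb.
have [b2 [Db2 [F1b2 F2b2]]] := @dir_lemma R D phi p (- e2 R) r Hc r0 Hb.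
rewrite normrN in F1b1 F2b1; rewrite normrN in F1b2 F2b2.
have Hl1 := @line_in R D p (e1 R) r r0 Hb.
have Hl2 := @line_in R D p (e2 R) r r0 Hb.
have d10 : 0 < r / (`|e1 R| + 1) by rewrite divr_gt0 // ltr_wpDl.
have d20 : 0 < r / (`|e2 R| + 1) by rewrite divr_gt0 // ltr_wpDl.
have Dp : D p by have := Hl1 0; rewrite scale0r addr0 normr0; apply.
exists a1, b1, a2, b2; do 4 split => //.
move=> /= eta De.
set d := eta - p.
have G1 := fun y => @G_y R D phi p (e1 R) _ a1 b1 y d10 Dp Hl1 F1a1 F2a1 F1b1 F2b1.
have G2 := fun y => @G_y R D phi p (e2 R) _ a2 b2 y d20 Dp Hl2 F1a2 F2a2 F1b2 F2b2.
have Hd : eta - p = d 0 0 *: e1 R + d 0 ord_max *: e2 R by exact: decomp2.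
have Hd' : eta - p = d 0 ord_max *: e2 R + d 0 0 *: e1 R by rewrite Hd addrC.
have I1 := two_d Hc HD Dp De Hd (G1 (d 0 0)).1 (G2 (- d 0 ord_max)).2.
have I2 := two_d Hc HD Dp De Hd' (G2 (d 0 ord_max)).1 (G1 (- d 0 0)).2.
rewrite dot2.
have r1 := rho_diff a1 b1 (d 0 0).
have r2 := rho_diff a2 b2 (d 0 ord_max).
move: I1 I2 r1 r2.
set x1 := d 0 0; set x2 := d 0 ord_max.
set A := rho a1 b1 x1; set B := rho a1 b1 (- x1); set C := rho a2 b2 x2; set E := rho a2 b2 (- x2).
lra.
Qed.

Lemma inf_comb (R : realType) (S1 S2 S3 : set R) (L t : R) :
  (forall x, S1 x -> L <= x) -> (forall x, S2 x -> L <= x) -> (forall x, S3 x -> L <= x) ->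
  S1 !=set0 -> S2 !=set0 -> 0 <= t <= 1 ->
  (forall x1 x2, S1 x1 -> S2 x2 -> S3 (t * x1 + (1 - t) * x2)) ->
  inf S3 <= t * inf S1 + (1 - t) * inf S2.
Proof.
move=> L1 L2 L3 n1 n2 /andP[t0 t1] Hc.
have lb1 : has_lbound S1 by exists L.
have lb2 : has_lbound S2 by exists L.
have lb3 : has_lbound S3 by exists L.
apply/ler_addgt0Pr => e e0.
have [x1 S1x1 hx1] := inf_adherent e0 (conj n1 lb1).
have [x2 S2x2 hx2] := inf_adherent e0 (conj n2 lb2).
have h := ge_inf lb3 (Hc _ _ S1x1 S2x2).
have h1 : t * x1 <= t * (inf S1 + e) by apply: ler_wpM2l => //; apply: ltW.
have h2 : (1 - t) * x2 <= (1 - t) * (inf S2 + e) by apply: ler_wpM2l; [lra | apply: ltW].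
lra.
Qed.
Theorem proposition5p3 (R : realType) (nx nf nh : nat)
  (P : set 'rV[R]_2)
  (ftil : 'I_nf -> 'rV[R]_nx -> 'rV[R]_2 -> R)
  (h : 'rV[R]_nx -> 'rV[R]_2 -> 'rV[R]_nh)
  (Q : set 'rV[R]_2)
  (x : 'rV[R]_2 -> 'rV[R]_nx)
  (xL xU : 'rV[R]_nx)
  (ncv ncc : 'I_nf -> nat)
  (fcv : forall it : 'I_nf, 'I_(ncv it) -> 'rV[R]_nx -> 'rV[R]_2 -> R)
  (fcc : forall it : 'I_nf, 'I_(ncc it) -> 'rV[R]_nx -> 'rV[R]_2 -> R)
  (i : 'I_nx) (phat : 'rV[R]_2) :
  (* n_x equations: f = (ftil, h) *)
  nx = (nf + nh)%N ->
  convex_setR P -> compact P ->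
  (* Q = { p in P | f(z,p) = 0 has a solution }, nonempty *)
  Q = [set p | P p /\ exists z, (forall it, ftil it z p = 0) /\ h z p = 0] ->
  Q !=set0 ->
  (* x : Q -> R^nx solves f(x(p),p) = 0 and lies in X = [xL,xU] *)
  (forall p, Q p -> (forall it, ftil it (x p) p = 0) /\ h (x p) p = 0) ->
  (forall p, Q p -> inbox xL xU (x p)) ->
  (* h affine, with linearly independent gradients grad_xi h_k (rows of A) *)
  (exists (A : 'M[R]_(nh, nx)) (B : 'M[R]_(nh, 2)) (c : 'rV[R]_nh),
     (forall z p, h z p = z *m A^T + p *m B^T + c) /\ row_free A) ->
  (* no component of ftil is affine *)
  (forall it, ~ affine_fun (ftil it)) ->
  (* finitely many (at least one) C^1 convex / concave pieces *)
  (forall it, (0 < ncv it)%N) -> (forall it, (0 < ncc it)%N) ->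
  (forall it j, C1 (fcv it j) /\ convex_on_XP xL xU P (fcv it j)) ->
  (forall it j, C1 (fcc it j) /\ concave_on_XP xL xU P (fcc it j)) ->
  (* max_j fcv^j and min_j fcc^j are relaxations of ftil on X x P *)
  (forall it z p, inbox xL xU z -> P p ->
     (forall j, fcv it j z p <= ftil it z p) /\
     (forall j, ftil it z p <= fcc it j z p)) ->
  (* phat in int(Q) *)
  (interior Q) phat ->
  (* Slater-type condition on a neighbourhood N of phat with N in Q *)
  (exists N : set 'rV[R]_2, nbhs phat N /\ N `<=` Q /\
     forall p, N p -> exists xi, inbox xL xU xi /\ h xi p = 0 /\
       (forall it j, fcv it j xi p < 0) /\
       (forall it j, - fcc it j xi p < 0) /\
       (forall j, xL 0 j - xi 0 j < 0) /\
       (forall j, xi 0 j - xU 0 j < 0)) ->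
  let phi := xcv xL xU h fcv fcc i in
  exists d1p d1m d2p d2m : R,
    dirder_is phi phat (e1 R) d1p /\ dirder_is phi phat (- e1 R) d1m /\
    dirder_is phi phat (e2 R) d2p /\ dirder_is phi phat (- e2 R) d2m /\
    let s : 'rV[R]_2 := 2^-1 *: \row_(j < 2) (if j == 0 then d1p - d1m else d2p - d2m) in
    forall eta, P eta -> feasible xL xU h fcv fcc eta !=set0 ->
      phi phat + dotv s (eta - phat) <= phi eta.

Proof.
move=> Hnx Pc Pcomp HQ Qne Hx Hxb [A [B [c [hE _]]]] _ _ _ Hcv Hcc _ _ [N [NN [NQ Hsl]]] phi.
set F := feasible xL xU h fcv fcc.
set D := [set q | P q /\ F q !=set0].
have Fbox : forall q z, F q z -> inbox xL xU z.
  move=> q z [_ [_ [_ [hL hU]]]] j.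
  by have := hL j; have := hU j; move=> a b; apply/andP; lra.
have Fcomb : forall p1 p2 z1 z2 t, P p1 -> P p2 -> F p1 z1 -> F p2 z2 -> 0 <= t <= 1 ->
    F (t *: p1 + (1 - t) *: p2) (t *: z1 + (1 - t) *: z2).
  move=> p1 p2 z1 z2 t P1 P2 Fz1 Fz2 ht.
  have B1 := Fbox _ _ Fz1; have B2 := Fbox _ _ Fz2.
  case: Fz1 => [h1 [cv1 [cc1 [L1 U1]]]]; case: Fz2 => [h2 [cv2 [cc2 [L2 U2]]]].
  move: ht => /andP[t0 t1].
  split.
    rewrite hE; rewrite hE in h1; rewrite hE in h2.
    rewrite !mulmxDl -!scalemxAl.
    move: h1 h2; generalize (z1 *m A^T) (z2 *m A^T) (p1 *m B^T) (p2 *m B^T) => Z1 Z2 Q1 Q2.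
    move=> /rowP h1 /rowP h2; apply/rowP => j.
    have := h1 j; have := h2 j; rewrite !mxE => e2 e1.
    have -> : Z1 0 j = - Q1 0 j - c 0 j by lra.
    have -> : Z2 0 j = - Q2 0 j - c 0 j by lra.
    ring.
  split.
    move=> it j; have [_ Hv] := Hcv it j.
    have := Hv _ _ _ _ t B1 P1 B2 P2 ltac:(apply/andP; lra).
    have := cv1 it j; have := cv2 it j; nra.
  split.
    move=> it j; have [_ Hv] := Hcc it j.
    have := Hv _ _ _ _ t B1 P1 B2 P2 ltac:(apply/andP; lra).
    have := cc1 it j; have := cc2 it j; rewrite /=; nra.
  split.
    move=> j; have := L1 j; have := L2 j; rewrite !mxE; nra.
  move=> j; have := U1 j; have := U2 j; rewrite !mxE; nra.
have HD : forall a b t, D a -> D b -> 0 <= t <= 1 -> D (t *: a + (1 - t) *: b).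
  move=> a b t [Pa [za Fa]] [Pb [zb Fb]] ht; split; first exact: Pc.
  by exists (t *: za + (1 - t) *: zb); apply: Fcomb.
have Hc : convD D phi.
  move=> a b t [Pa [za Fa]] [Pb [zb Fb]] ht.
  rewrite /phi /xcv.
  apply: (@inf_comb R _ _ _ (xL 0 i)).
  - by move=> _ [z Fz <-]; have /andP[] := Fbox _ _ Fz i.
  - by move=> _ [z Fz <-]; have /andP[] := Fbox _ _ Fz i.
  - by move=> _ [z Fz <-]; have /andP[] := Fbox _ _ Fz i.
  - by exists (za 0 i); exists za.
  - by exists (zb 0 i); exists zb.
  - exact: ht.
  - move=> _ _ [z1 F1 <-] [z2 F2 <-].
    exists (t *: z1 + (1 - t) *: z2); first exact: Fcomb.
    by rewrite !mxE.
have [r r0 Hb] : exists2 r, 0 < r & forall q, ball phat r q -> D q.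
  have [r r0 Hr] := (nbhs_ballP _ _).1 NN.
  exists r => // q /Hr Nq.
  have Qq := NQ _ Nq.
  rewrite HQ in Qq; case: Qq => Pq _; split => //.
  have [xi [_ [hxi [cvx [ccx [Lx Ux]]]]]] := Hsl _ Nq.
  exists xi; split => //; split; first by move=> it j; apply: ltW.
  split; first by move=> it j; apply: ltW.
  by split => j; apply: ltW.
have [d1p [d1m [d2p [d2m [H1 [H2 [H3 [H4 H5]]]]]]]] := compass Hc HD r0 Hb.
exists d1p, d1m, d2p, d2m; do 4 split => //.
move: H5 => /= H5 eta Pe Fe; exact: (H5 eta (conj Pe Fe)).
Qed.
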